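(* There exist an environment $E$ and a total preorder $\succeq$ on $\Pi^E$ such that $\succeq\in\mathrm{Ord}_{\mathrm{LAR}}(E)$ but $\succeq\notin\mathrm{Ord}_{\mathrm{ONMR}}(E)$.
   Context: An environment is a tuple $E=(\mathcal S,\mathcal A,\mathcal T,\mathcal I)$ where $\mathcal S,\mathcal A$ are finite nonempty sets, $\mathcal T:\mathcal S\times\mathcal A\to\Delta(\mathcal S)$ and $\mathcal I\in\Delta(\mathcal S)$. A policy is a map $\pi:\mathcal S\to\Delta(\mathcal A)$ (stationary, possibly stochastic); $\Pi^E$ denotes the set of all policies. A trajectory $\xi=(s_0,a_0,s_1,a_1,\dots)$ is generated under $\pi$ by $s_0\sim\mathcal I$, $a_t\sim\pi(s_t)$, $s_{t+1}\sim\mathcal T(s_t,a_t)$; $\mathbb E^\pi_\xi$ denotes expectation under this distribution. An objective-specification formalism $X$ assigns to each environment $E$ a set of objective specifications, each inducing a total preorder $\succeq$ on $\Pi^E$; $\mathrm{Ord}_X(E)$ is the set of total preorders so induced. A specification defining a scalar $J:\Pi^E\to\mathbb R$ induces $\pi_1\succeq\pi_2\iff J(\pi_1)\ge J(\pi_2)$. LAR: specification $(\mathcal R)$, $\mathcal R:\mathcal S\times\mathcal A\times\mathcal S\to\mathbb R$, $J(\pi)=\lim_{N\to\infty}\frac1N\mathbb E^\pi_\xi[\sum_{t=0}^{N-1}\mathcal R(s_t,a_t,s_{t+1})]$. ONMR: specification $(\mathcal R,f,\gamma)$ with $\mathcal R:\mathcal S\times\mathcal A\times\mathcal S\to\mathbb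 R$, $f:\mathbb R\to\mathbb R$, $\gamma\in[0,1)$; $J(\pi)=f\big(\mathbb E^\pi_\xi[\sum_{t=0}^\infty\gamma^t\mathcal R(s_t,a_t,s_{t+1})]\big)$. *)

(* Defs.v *)
From mathcomp Require Import all_boot all_order all_algebra.
From mathcomp Require Import all_classical all_reals all_analysis.
Set Implicit Arguments. Unset Strict Implicit. Unset Printing Implicit Defensive.
Import Order.TTheory GRing.Theory Num.Theory numFieldNormedType.Exports.
Local Open Scope ring_scope.

Section RL.
Variable R : realType.

Definition is_dist (X : finType) (d : X -> R) : Prop :=
  (forall x, 0 <= d x) /\ \sum_(x : X) d x = 1.

Record env := Env {
  St : finType;
  Ac : finType;
  St_nonempty : (0 < #|{: St}|)%N;
  Ac_nonempty : (0 < #|{: Ac}|)%N;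
  Tr : St -> Ac -> St -> R;
  Init : St -> R;
  Tr_dist : forall s a, is_dist (Tr s a);
  Init_dist : is_dist Init }.

(* stationary stochastic policies: pi s a = pi(s)(a) *)
Definition policy (E : env) := St E -> Ac E -> R.
Definition is_policy (E : env) (pi : policy E) : Prop :=
  forall s, is_dist (pi s).

(* probability of the trajectory prefix s_0 a_0 s_1 ... a_{N-1} s_N *)
Definition prefix_prob (E : env) (pi : policy E) (N : nat)
    (s : {ffun 'I_N.+1 -> St E}) (a : {ffun 'I_N -> Ac E}) : R :=
  Init (s ord0) *
  \prod_(t < N) (pi (s (widen_ord (leqnSn N) t)) (a t) *
                 Tr (s (widen_ord (leqnSn N) t)) (a t) (s (lift ord0 t))).

(* E^pi_xi [ sum_{t<N} g t (s_t, a_t, s_{t+1}) ], computed on the law of the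
   length-N prefix of the trajectory *)
Definition exp_sum (E : env) (pi : policy E) (N : nat)
    (g : nat -> St E -> Ac E -> St E -> R) : R :=
  \sum_(s : {ffun 'I_N.+1 -> St E}) \sum_(a : {ffun 'I_N -> Ac E})
    prefix_prob pi s a *
    \sum_(t < N) g t (s (widen_ord (leqnSn N) t)) (a t) (s (lift ord0 t)).

Definition reward (E : env) := St E -> Ac E -> St E -> R.

Definition J_LAR (E : env) (Rw : reward E) (pi : policy E) : R :=
  limn (fun N : nat => N%:R^-1 * exp_sum pi N (fun _ => Rw)).

(* ONMR objective: f (E[sum_{t>=0} gamma^t R(s_t,a_t,s_{t+1})]), the expectation
   of the (bounded, absolutely convergent) series taken as the limit of the
   expectations of its partial sums *)
Definition J_ONMR (E : env) (Rw : reward E) (f : R -> R) (gamma : R)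
    (pi : policy E) : R :=
  f (limn (fun N : nat => exp_sum pi N (fun t s a s' => gamma ^+ t * Rw s a s'))).

Definition prel (E : env) := policy E -> policy E -> Prop.

Definition total_preorder_on (E : env) (ge : prel E) : Prop :=
  (forall p, is_policy p -> ge p p) /\
  (forall p q r, is_policy p -> is_policy q -> is_policy r ->
     ge p q -> ge q r -> ge p r) /\
  (forall p q, is_policy p -> is_policy q -> ge p q \/ ge q p).

Definition induced_by (E : env) (J : policy E -> R) (ge : prel E) : Prop :=
  forall p q, is_policy p -> is_policy q -> (ge p q <-> J q <= J p).

Definition in_Ord_LAR (E : env) (ge : prel E) : Prop :=
  exists Rw : reward E, induced_by (J_LAR Rw) ge.

Definition in_Ord_ONMR (E : env) (ge : prel E) : Prop :=
  exists (Rw : reward E) (f : R -> R) (gamma : R),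
    0 <= gamma < 1 /\ induced_by (J_ONMR Rw f gamma) ge.

End RL.

(* Main.v *)
Require Import Defs.
From mathcomp Require Import all_boot all_order all_algebra.
From mathcomp Require Import all_classical all_reals all_analysis.
From mathcomp Require Import ring lra.
Set Implicit Arguments. Unset Strict Implicit. Unset Printing Implicit Defensive.
Import Order.TTheory GRing.Theory Num.Theory numFieldNormedType.Exports.
Local Open Scope ring_scope.

Section Ext.
Variable T : finType.
Definition ext n (f : {ffun 'I_n -> T}) (x : T) : {ffun 'I_n.+1 -> T} :=
  [ffun i : 'I_n.+1 => if insub (val i) is Some j then f j else x].
Definition restr n (g : {ffun 'I_n.+1 -> T}) : {ffun 'I_n -> T} :=
  [ffun j => g (widen_ord (leqnSn n) j)].

Lemma ext_lt n f x (i : 'I_n.+1) (j : 'I_n) : val i = val j -> @ext n f x i = f j.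
Proof.
move=> e; rewrite ffunE; case: insubP => [j' _ ej'|]; last by rewrite e ltn_ord.
by congr (f _); apply: val_inj; rewrite ej' e.
Qed.

Lemma ext_max n f x (i : 'I_n.+1) : val i = n -> @ext n f x i = x.
Proof.
move=> e; rewrite ffunE; case: insubP => [j' Hj _|] //.
by move: Hj; rewrite e ltnn.
Qed.

Lemma ext_restr n (g : {ffun 'I_n.+1 -> T}) : ext (restr g) (g ord_max) = g.
Proof.
apply/ffunP => i; rewrite ffunE; case: insubP => [j _ ej|].
  by rewrite ffunE; congr (g _); apply: val_inj; rewrite /= ej.
move=> Hi; congr (g _); apply: val_inj => /=.
by have := ltn_ord i; rewrite ltnS leq_eqVlt (negPf Hi) orbF => /eqP.
Qed.

Lemma restr_ext n f x : restr (@ext n f x) = f.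
Proof. apply/ffunP => j; rewrite [in LHS]ffunE. by apply: ext_lt. Qed.

Variable R : realType.
Lemma sum_ext n (F : {ffun 'I_n.+1 -> T} -> R) :
  \sum_(g : {ffun 'I_n.+1 -> T}) F g =
  \sum_(f : {ffun 'I_n -> T}) \sum_(x : T) F (ext f x).
Proof.
rewrite pair_bigA /=.
rewrite (reindex (fun p : {ffun 'I_n -> T} * T => ext p.1 p.2)) //=.
apply: onW_bij; exists (fun g => (restr g, g ord_max)).
  by case=> f x /=; rewrite restr_ext ext_max.
by move=> g /=; rewrite ext_restr.
Qed.

Lemma sum_ffun0 (F : {ffun 'I_0 -> T} -> R) (f0 : {ffun 'I_0 -> T}) :
  \sum_(f : {ffun 'I_0 -> T}) F f = F f0.
Proof.
rewrite (eq_bigr (fun _ => F f0)); last first.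
  by move=> f _; congr F; apply/ffunP => -[].
by rewrite sumr_const card_ffun card_ord expn0 mulr1n.
Qed.
End Ext.
Section Gen.
Variable R : realType.
Variable E : env R.
Variable pi : policy E.
Hypothesis Hpi : is_policy pi.
Local Notation S := (St E).
Local Notation A := (Ac E).

Definition W N (H : {ffun 'I_N.+1 -> S} -> {ffun 'I_N -> A} -> R) :=
  \sum_(s : {ffun 'I_N.+1 -> S}) \sum_(a : {ffun 'I_N -> A}) prefix_prob pi s a * H s a.

Lemma pp_ext N (s : {ffun 'I_N.+1 -> S}) (a : {ffun 'I_N -> A}) x y :
  prefix_prob pi (ext s x) (ext a y) =
  prefix_prob pi s a * (pi (s ord_max) y * Tr (s ord_max) y x).
Proof.
rewrite /prefix_prob big_ord_recr /= -!mulrA; congr (_ * _).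
  by congr Init; apply: ext_lt.
congr (_ * _).
  apply: eq_bigr => t _.
  rewrite (@ext_lt _ _ _ _ _ (widen_ord (leqnSn N) t)) //.
  rewrite (@ext_lt _ _ _ _ _ t) //.
  by rewrite (@ext_lt _ _ _ _ _ (lift ord0 t)).
rewrite (@ext_lt _ _ _ _ _ ord_max) // (@ext_max _ _ _ _ ord_max) //.
by rewrite (@ext_max _ _ _ _ (lift ord0 ord_max)).
Qed.

Lemma W_step N (H : {ffun 'I_N.+2 -> S} -> {ffun 'I_N.+1 -> A} -> R) :
  W H = W (fun s a => \sum_y \sum_x pi (s ord_max) y * Tr (s ord_max) y x
                         * H (ext s x) (ext a y)).
Proof.
rewrite /W sum_ext; apply: eq_bigr => s _.
under eq_bigr => x _ do rewrite sum_ext.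
rewrite exchange_big; apply: eq_bigr => a _.
rewrite mulr_sumr exchange_big /=; apply: eq_bigr => y _.
rewrite mulr_sumr; apply: eq_bigr => x _.
by rewrite pp_ext !mulrA.
Qed.

Lemma sumPT z : \sum_y \sum_x pi z y * Tr z y x = 1.
Proof.
have [_ <-] := Hpi z; apply: eq_bigr => y _.
by rewrite -mulr_sumr; have [_ ->] := Tr_dist z y; rewrite mulr1.
Qed.

Lemma WD N (F G : {ffun 'I_N.+1 -> S} -> {ffun 'I_N -> A} -> R) :
  W (fun s a => F s a + G s a) = W F + W G.
Proof.
rewrite /W -big_split; apply: eq_bigr => s _.
by rewrite -big_split; apply: eq_bigr => a _; rewrite mulrDr.
Qed.

Definition Pm t z := W (fun (s : {ffun 'I_t.+1 -> S}) (_ : {ffun 'I_t -> A}) =>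
  (s ord_max == z)%:R).

Lemma W_last N (h : S -> R) :
  W (fun (s : {ffun 'I_N.+1 -> S}) (_ : {ffun 'I_N -> A}) => h (s ord_max)) =
  \sum_z Pm N z * h z.
Proof.
have e : forall s : {ffun 'I_N.+1 -> S},
  h (s ord_max) = \sum_z (s ord_max == z)%:R * h z.
  move=> s; rewrite (bigD1 (s ord_max)) //= eqxx mul1r big1 ?addr0 //.
  by move=> z /negPf; rewrite eq_sym => ->; rewrite mul0r.
rewrite /W; under eq_bigr => s _ do under eq_bigr => a _ do rewrite e mulr_sumr.
under eq_bigr => s _ do rewrite exchange_big.
rewrite exchange_big; apply: eq_bigr => z _.
rewrite /Pm /W mulr_suml; apply: eq_bigr => s _.
by rewrite mulr_suml; apply: eq_bigr => a _; rewrite mulrA.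
Qed.

Lemma exp_sumE N g : exp_sum pi N g =
  \sum_(t < N) \sum_z Pm t z *
     \sum_y \sum_x pi z y * Tr z y x * g (nat_of_ord t) z y x.
Proof.
elim: N => [|N IH].
  rewrite big_ord0 /exp_sum big1 // => s _; rewrite big1 // => a _.
  by rewrite big_ord0 mulr0.
rewrite big_ord_recr /= -IH -W_last.
have -> : exp_sum pi N.+1 g = W (fun s a =>
   \sum_(t < N.+1) g t (s (widen_ord (leqnSn N.+1) t)) (a t) (s (lift ord0 t))) by [].
rewrite W_step -WD; apply: eq_bigr => s _; apply: eq_bigr => a _; congr (_ * _).
have cl : forall y x, \sum_(t < N.+1)
           g t (ext s x (widen_ord (leqnSn N.+1) t)) (ext a y t) (ext s x (lift ord0 t))
   = \sum_(t < N) g t (s (widen_ord (leqnSn N) t)) (a t) (s (lift ord0 t))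
     + g N (s ord_max) y x.
  move=> y x; rewrite big_ord_recr /=; congr (_ + _).
    apply: eq_bigr => t _.
    rewrite (@ext_lt _ _ _ _ _ (widen_ord (leqnSn N) t)) //.
    rewrite (@ext_lt _ _ _ _ _ t) //.
    by rewrite (@ext_lt _ _ _ _ _ (lift ord0 t)).
  rewrite (@ext_lt _ _ _ _ _ ord_max) // (@ext_max _ _ _ _ ord_max) //.
  by rewrite (@ext_max _ _ _ _ (lift ord0 ord_max)).
transitivity (\sum_y \sum_x pi (s ord_max) y * Tr (s ord_max) y x *
  (\sum_(t < N) g t (s (widen_ord (leqnSn N) t)) (a t) (s (lift ord0 t))
     + g N (s ord_max) y x)).
  apply: eq_bigr => y _; apply: eq_bigr => x _. by rewrite cl.
apply: etrans.
  apply: eq_bigr => y _; apply: etrans.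
    apply: eq_bigr => x _; exact: mulrDr.
  exact: big_split.
rewrite big_split /=; congr (_ + _).
rewrite -[RHS]mul1r -(sumPT (s ord_max)) mulr_suml; apply: eq_bigr => y _.
by rewrite mulr_suml.
Qed.

Lemma Pm_rec t z' : Pm t.+1 z' = \sum_z Pm t z * \sum_y pi z y * Tr z y z'.
Proof.
rewrite -W_last /Pm W_step; apply: eq_bigr => s _; apply: eq_bigr => a _.
congr (_ * _); apply: eq_bigr => y _.
rewrite (bigD1 z') //= big1 ?addr0.
  by rewrite (@ext_max _ _ _ _ ord_max) // eqxx mulr1.
by move=> x /negPf nx; rewrite (@ext_max _ _ _ _ ord_max) // nx mulr0.
Qed.

Lemma Pm0 z : Pm 0 z = Init z.
Proof.
rewrite /Pm /W sum_ext (sum_ffun0 _ (ffun0 (card_ord 0))).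
rewrite (bigD1 z) //= [X in _ + X]big1 ?addr0.
  rewrite (sum_ffun0 _ (ffun0 (card_ord 0))) /prefix_prob big_ord0 mulr1.
  rewrite (@ext_max _ _ _ _ ord0) // (@ext_max _ _ _ _ ord_max) // eqxx mulr1.
  done.
move=> x /negPf nx; rewrite big1 // => a _.
by rewrite (@ext_max _ _ _ _ ord_max) // nx mulr0.
Qed.
End Gen.
Section Spec.
Variable R : realType.

Definition TrB (s a s' : bool) : R :=
  if s then (if s' then 1 else 0) else (if s' == a then 1 else 0).
Definition InitB (s : bool) : R := if s then 0 else 1.

Lemma TrB_dist s a : is_dist (TrB s a).
Proof.
split; first by move=> s'; rewrite /TrB; case: s; case: s'; case: a.
by rewrite big_bool /TrB; case: s; case: a; rewrite /= ?addr0 ?add0r.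
Qed.

Lemma InitB_dist : is_dist InitB.
Proof.
split; first by case; rewrite /InitB.
by rewrite big_bool /InitB /= add0r.
Qed.

Lemma card_bool_gt0 : (0 < #|{: bool}|)%N.
Proof. by rewrite card_bool. Qed.

Definition EnvB : env R := @Env R bool bool card_bool_gt0 card_bool_gt0
  TrB InitB TrB_dist InitB_dist.

Definition pol (x y : R) : policy EnvB :=
  fun (s a : bool) => if s then (if a then y else 1 - y) else (if a then x else 1 - x).

Lemma pol_policy x y : 0 <= x <= 1 -> 0 <= y <= 1 -> is_policy (pol x y).
Proof.
move=> /andP[x0 x1] /andP[y0 y1] s; split.
  by move=> a; rewrite /pol; case: s; case: a; rewrite ?subr_ge0.
by rewrite big_bool /pol; case: s; rewrite /= addrC subrK.
Qed.
End Spec.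
Section Spec2.
Variable R : realType.
Variables x y : R.
Hypothesis hx : 0 <= x <= 1.
Hypothesis hy : 0 <= y <= 1.
Local Notation p := (pol x y).

Lemma PmB t : Pm p t false = (1 - x) ^+ t /\ Pm p t true = 1 - (1 - x) ^+ t.
Proof.
elim: t => [|t [IH0 IH1]].
  by rewrite !Pm0 /= /InitB expr0 subrr.
rewrite !Pm_rec !big_bool /= IH0 IH1 /pol /TrB /= exprS.
split; ring.
Qed.

Lemma exp_sumB N g : exp_sum p N g =
  \sum_(t < N) ((1 - x) ^+ t * ((1 - x) * g (nat_of_ord t) false false false + x * g (nat_of_ord t) false true true)
     + (1 - (1 - x) ^+ t) * (y * g (nat_of_ord t) true true true + (1 - y) * g (nat_of_ord t) true false true)).
Proof.
rewrite exp_sumE; last exact: pol_policy.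
apply: eq_bigr => t _; rewrite big_bool /= addrC; have [-> ->] := PmB t.
rewrite !big_bool /= /pol /TrB /=; ring.
Qed.
End Spec2.
Section Lim.
Local Open Scope classical_set_scope.
Variable R : realType.
Definition Rw0 : reward (EnvB R) := fun s a s' => if s && a && s' then 1 else 0.

Lemma harmonicE (N : nat) : (N.+1%:R : R)^-1 = harmonic N.
Proof. by []. Qed.

Lemma JLAR_pol (x y : R) : 0 < x <= 1 -> 0 <= y <= 1 -> J_LAR Rw0 (pol x y) = y.
Proof.
move=> /andP[x0 x1] hy.
have hx : 0 <= x <= 1 by rewrite x1 ltW.
set u := 1 - x.
have u1 : `|u| < 1 by rewrite ger0_norm /u; [lra | lra].
have e : forall N, exp_sum (pol x y) N (fun _ => Rw0) =
    y * (N%:R - series (geometric 1 u) N).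
  move=> N; rewrite exp_sumB // /Rw0 /= /series /= big_mkord.
  have -> : (N%:R : R) = \sum_(i < N) (1:R) by rewrite sumr_const card_ord.
  rewrite -sumrB mulr_sumr; apply: eq_bigr => t _.
  rewrite -/u; ring.
rewrite /J_LAR; apply: cvg_lim => //.
rewrite -cvg_shiftS.
have hG : (fun N => series (geometric 1 u) N.+1) @ \oo --> (1 * (1 - u)^-1).
  by rewrite (cvg_shiftS (fun N => series (geometric 1 u) N)); exact: cvg_geometric_series.
have : (fun N => y - y * (harmonic N * series (geometric 1 u) N.+1)) @ \oo -->
   (y - y * (0 * (1 * (1 - u)^-1))).
  apply: cvgB; first exact: cvg_cst.
  apply: (cvgM (cvg_cst y)); apply: cvgM; [exact: cvg_harmonic | exact: hG].
rewrite mul0r mulr0 subr0; apply: cvg_trans; apply: near_eq_cvg; near=> N.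
rewrite /= e; have hN : (N.+1%:R : R) != 0 by rewrite pnatr_eq0.
set G := series _ _; field; by rewrite addrC natr1.
Unshelve. all: by end_near. Qed.
End Lim.
Section Lim2.
Local Open Scope classical_set_scope.
Variable R : realType.
Lemma V_pol (x y g : R) (Rw : reward (EnvB R)) : 0 <= x <= 1 -> 0 <= y <= 1 ->
  0 <= g < 1 ->
  limn (fun N => exp_sum (pol x y) N (fun t s a s' => g ^+ t * Rw s a s')) =
  ((1 - x) * Rw false false false + x * Rw false true true
    - (y * Rw true true true + (1 - y) * Rw true false true)) * (1 - g * (1 - x))^-1
  + (y * Rw true true true + (1 - y) * Rw true false true) * (1 - g)^-1.
Proof.
move=> hx hy /andP[g0 g1].
set r0 := (1 - x) * _ + _; set r1 := y * _ + _.
have e : forall N, exp_sum (pol x y) N (fun t s a s' => g ^+ t * Rw s a s') =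
   series (geometric (r0 - r1) (g * (1 - x))) N + series (geometric r1 g) N.
  move=> N; rewrite exp_sumB // /series /= !big_mkord -big_split /=.
  apply: eq_bigr => t _; rewrite /r0 /r1 exprMn; ring.
rewrite (_ : (fun N => _) = (fun N => series (geometric (r0 - r1) (g * (1 - x))) N
   + series (geometric r1 g) N)); last by apply: funext => N; rewrite e.
apply: cvg_lim => //; apply: cvgD; apply: cvg_geometric_series.
  rewrite ger0_norm ?mulr_ge0 //; last lra.
  have : g * (1 - x) <= g by rewrite ler_piMr //; lra.
  lra.
by rewrite ger0_norm.
Qed.
End Lim2.
Section Alg.
Variable R : realType.
Definition Vf (Rw : reward (EnvB R)) (g x y : R) : R :=
  ((1 - x) * Rw false false false + x * Rw false true true
    - (y * Rw true true true + (1 - y) * Rw true false true)) * (1 - g * (1 - x))^-1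
  + (y * Rw true true true + (1 - y) * Rw true false true) * (1 - g)^-1.

Lemma alg (a b c d g y1 s : R) : g != 0 -> c - d != 0 -> 0 <= s -> 0 <= g < 1 ->
  let Q := (1 - g) * ((1 - g) * b - a + g * (d + y1 * (c - d))) / (g * (c - d)) in
  let y2 := y1 + Q * s in
  ((1 - 1) * a + 1 * b - (y1 * c + (1 - y1) * d)) * (1 - g * (1 - 1))^-1
    + (y1 * c + (1 - y1) * d) * (1 - g)^-1 =
  ((1 - (1 + s)^-1) * a + (1 + s)^-1 * b - (y2 * c + (1 - y2) * d)) * (1 - g * (1 - (1 + s)^-1))^-1
    + (y2 * c + (1 - y2) * d) * (1 - g)^-1.
Proof.
move=> g0 k0 s0 /andP[g0' g1] Q y2.
have h1 : 1 + s != 0 by apply/eqP; lra.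
have h2 : 1 - g != 0 by apply/eqP; lra.
have t0 : 0 < (1 + s)^-1 by rewrite invr_gt0; lra.
have t1 : (1 + s)^-1 <= 1 by rewrite invf_le1; lra.
have h3 : 1 - g * (1 - (1 + s)^-1) != 0 by apply/eqP; nra.
rewrite /y2 /Q. field.
by rewrite h2 k0 g0 h1 /=; apply/eqP; nra.
Qed.
End Alg.
Lemma eq_le_refl (R : realType) (u v : R) : u = v -> v <= u.
Proof. by move=> ->. Qed.
Section Col.
Variable R : realType.
Lemma collide (Rw : reward (EnvB R)) (g : R) : 0 <= g < 1 ->
  exists x1 y1 x2 y2 : R, (0 < x1 <= 1) /\ (0 <= y1 <= 1) /\ (0 < x2 <= 1) /\
    (0 <= y2 <= 1) /\ y1 != y2 /\ Vf Rw g x1 y1 = Vf Rw g x2 y2.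
Proof.
move=> /andP[g0' g1].
have hg1 : 1 - g != 0 by apply/eqP; lra.
case: (eqVneq g 0) => [g0|g0].
  exists 1, 0, 1, 1; split; first by rewrite ltr01 lexx.
  split; first by rewrite lexx ler01.
  split; first by rewrite ltr01 lexx.
  split; first by rewrite ler01 lexx.
  split; first by rewrite eq_sym oner_neq0.
  rewrite /Vf g0 !mul0r !subr0 invr1 !mulr1; ring.
case: (eqVneq (Rw true true true - Rw true false true) 0) => [k0|k0].
  move/eqP: k0; rewrite subr_eq0 => /eqP cd.
  exists 1, 0, 1, 1; split; first by rewrite ltr01 lexx.
  split; first by rewrite lexx ler01.
  split; first by rewrite ltr01 lexx.
  split; first by rewrite ler01 lexx.
  split; first by rewrite eq_sym oner_neq0.
  rewrite /Vf cd; ring.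
set a := Rw false false false; set b := Rw false true true.
set c := Rw true true true; set d := Rw true false true.
pose E y1 := (1 - g) * b - a + g * (d + y1 * (c - d)).
have [y1 [hy1 hE]] : exists y1, 1/4 <= y1 <= 1/2 /\ E y1 != 0.
  case: (eqVneq (E (1/4)) 0) => h; [exists (1/2) | exists (1/4)]; split => //; try lra.
  apply/eqP => h'.
  have : g * (c - d) = 0 by move: h h'; rewrite /E; lra.
  by apply/eqP; rewrite mulf_neq0.
pose Q := (1 - g) * E y1 / (g * (c - d)).
have Q0 : Q != 0 by rewrite /Q mulf_neq0 ?invr_neq0 ?mulf_neq0.
pose s := (4 * (`|Q| + 1))^-1.
have hQ1 : 0 < 4 * (`|Q| + 1) by rewrite mulr_gt0 // ltr_pwDr.
have s0 : 0 < s by rewrite /s invr_gt0.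
have sQ : s * (4 * (`|Q| + 1)) = 1 by rewrite /s mulVf // gt_eqF.
have Qn : - `|Q| <= Q <= `|Q| by rewrite -ler_norml.
have hQs : - (1/4) <= Q * s <= 1/4.
  apply/andP; split; nra.
exists 1, y1, (1 + s)^-1, (y1 + Q * s).
split; first lra.
split; first lra.
split.
  rewrite invr_gt0 invf_le1; lra.
split; first lra.
split.
  rewrite -subr_eq0 opprD addrA subrr sub0r oppr_eq0 mulf_neq0 //; exact: lt0r_neq0.
rewrite /Vf -/a -/b -/c -/d.
have gg : 0 <= g < 1 by rewrite g0' g1.
exact: (@alg R a b c d g y1 s g0 k0 (ltW s0) gg).
Qed.
End Col.

Theorem mainTheorem12 (R : realType) :
  exists (E : env R) (ge : prel E),
    total_preorder_on ge /\ in_Ord_LAR ge /\ ~ in_Ord_ONMR ge.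
Proof.
exists (EnvB R), (fun p q => J_LAR (@Rw0 R) q <= J_LAR (@Rw0 R) p).
split; [split; [|split]|split].
- by move=> p _.
- by move=> p q r _ _ _ h1 h2; exact: le_trans h2 h1.
- by move=> p q _ _; apply/orP; rewrite orbC; exact: le_total.
- by exists (@Rw0 R) => p q _ _.
- move=> [Rw [f [g [hg H]]]].
  have [x1 [y1 [x2 [y2 [hx1 [hy1 [hx2 [hy2 [ne eV]]]]]]]]] := collide Rw hg.
  have hx1' : 0 <= x1 <= 1 by move: hx1 => /andP[? ?]; apply/andP; split => //; exact: ltW.
  have hx2' : 0 <= x2 <= 1 by move: hx2 => /andP[? ?]; apply/andP; split => //; exact: ltW.
  have P1 := pol_policy hx1' hy1.
  have P2 := pol_policy hx2' hy2.
  have eJ : J_ONMR Rw f g (pol x1 y1) = J_ONMR Rw f g (pol x2 y2).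
    by rewrite /J_ONMR !V_pol //; congr f; exact: eV.
  have h12 := (H _ _ P1 P2).2 (eq_le_refl eJ).
  have h21 := (H _ _ P2 P1).2 (eq_le_refl (esym eJ)).
  rewrite !JLAR_pol // in h12 h21.
  by move/eqP: ne; apply; apply/eqP; rewrite eq_le h12 h21.
Qed.
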